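(* Let $\mathcal{M}=(S,\mathcal{I})$ be a courteously colored matroid of rank $r$ such that for every $s\in S$, the matroid $\mathcal{M}\setminus\{s\}$ (obtained by deleting $s$) is not courteously colored. Then $|S|\le 2r$, and this upper bound is sharp (for every positive integer $r$ there is such a matroid with $|S|=2r$).
   Context: A coloring of a matroid assigns a color to each element of its ground set; deletions inherit colors. For a color $c$, $\mathcal{M}_{\overline{c}}$ is the matroid obtained by deleting all elements of color $c$. A colored matroid $\mathcal{M}$ is courteously colored if for every color $c$, the rank of $\mathcal{M}_{\overline{c}}$ equals the rank of $\mathcal{M}$. *)

(* Defs.v *)
From mathcomp Require Import all_boot.
Set Implicit Arguments. Unset Strict Implicit. Unset Printing Implicit Defensive.

Record matroid (T : finType) := Matroid {
  ground : {set T};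
  indep : {set T} -> bool }.

Definition is_matroid (T : finType) (M : matroid T) : Prop :=
  [/\ indep M set0,
      forall I : {set T}, indep M I -> I \subset ground M,
      forall I J : {set T}, J \subset I -> indep M I -> indep M J &
      forall I J : {set T}, indep M I -> indep M J -> #|I| < #|J| ->
        exists2 x, x \in J :\: I & indep M (x |: I)].

Definition deletion (T : finType) (M : matroid T) (X : {set T}) : matroid T :=
  Matroid (ground M :\: X) (fun I => indep M I && (I \subset ground M :\: X)).

Definition rank (T : finType) (M : matroid T) : nat :=
  \max_(I : {set T} | indep M I) #|I|.

(* M colored by col (colors inherited by deletions) is courteously colored:
   deleting all elements of any one color c does not lower the rank. *)
Definition courteous (T : finType) (C : eqType) (col : T -> C)
    (M : matroid T) : Prop :=
  forall c : C, rank (deletion M [set x | col x == c]) = rank M.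

(* Main.v *)
Require Import Defs.
From mathcomp Require Import all_boot zify.
Set Implicit Arguments. Unset Strict Implicit. Unset Printing Implicit Defensive.

Lemma max_wit (I : finType) (P : pred I) (F : I -> nat) i0 :
  P i0 -> exists2 i, P i & \max_(i | P i) F i = F i.
Proof.
move=> Pi0.
have h : 0 < #|P| by apply/card_gt0P; exists i0.
by have [i Pi E] := eq_bigmax_cond F h; exists i.
Qed.

Section Gen.
Variables (T : finType) (M : matroid T).
Hypothesis HM : is_matroid M.

Definition rk (A : {set T}) :=
  \max_(I : {set T} | indep M I && (I \subset A)) #|I|.

Lemma rk_wit (A : {set T}) : exists I, [/\ indep M I, I \subset A & #|I| = rk A].
Proof.
case: HM => h0 _ _ _.
have [I /andP[hI hA] E] := @max_wit _ (fun I : {set T} => indep M I && (I \subset A)) (fun I => #|I|) set0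
  (introT andP (conj h0 (sub0set A))).
by exists I; split.
Qed.

Lemma rk_ge (A I : {set T}) : indep M I -> I \subset A -> #|I| <= rk A.
Proof. by move=> h1 h2; apply: (@leq_bigmax_cond _ (fun I : {set T} => indep M I && (I \subset A)) (fun I : {set T} => #|I|)); rewrite h1 h2. Qed.

Lemma rk_mono (A B : {set T}) : A \subset B -> rk A <= rk B.
Proof.
move=> AB; apply/bigmax_leqP => I /andP[h1 h2]; apply: rk_ge => //.
exact: subset_trans AB.
Qed.

Lemma rk_le_rank (A : {set T}) : rk A <= rank M.
Proof.
apply/bigmax_leqP => I /andP[h1 _].
exact: (@leq_bigmax_cond _ (fun I : {set T} => indep M I) (fun I : {set T} => #|I|)).
Qed.

Lemma rank_wit : exists I, indep M I /\ #|I| = rank M.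
Proof.
case: HM => h0 _ _ _.
have [I hI E] := @max_wit _ (fun I : {set T} => indep M I) (fun I => #|I|) set0 h0.
by exists I.
Qed.

Lemma rk_add1 (A : {set T}) x : rk (x |: A) <= (rk A).+1.
Proof.
case: HM => _ _ h3 _.
have [I [hI hs <-]] := rk_wit (x |: A).
have hI' : indep M (I :\ x) by apply: h3 hI; apply: subD1set.
have : #|I :\ x| <= rk A.
  apply: rk_ge => //; apply/subsetP => y; rewrite !inE => /andP[ny yI].
  by have := subsetP hs y yI; rewrite !inE (negPf ny).
rewrite (cardsD1 x I); case: (x \in I) => /=; lia.
Qed.

Lemma rk_aug (A X : {set T}) : rk A < rk (A :|: X) -> exists2 x, x \in X & rk A < rk (x |: A).
Proof.
case: HM => _ _ _ h4 lt.
have [I [hI hIs eI]] := rk_wit A.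
have [J [hJ hJs eJ]] := rk_wit (A :|: X).
have [x] := h4 I J hI hJ ltac:(by rewrite eI eJ).
rewrite !inE => /andP[xI xJ] hxI.
have hc : #|x |: I| = (rk A).+1 by rewrite cardsU1 xI eI.
case xX : (x \in X).
  exists x => //; rewrite -hc; apply: rk_ge => //; exact: setUS.
have xA : x \in A by have := subsetP hJs x xJ; rewrite !inE xX orbF.
have : #|x |: I| <= rk A.
  apply: rk_ge => //; apply/subsetP => y; rewrite !inE => /orP[/eqP -> //|]; exact: (subsetP hIs).
by rewrite hc ltnn.
Qed.

Lemma rank_del (X : {set T}) : rank (deletion M X) = rk (ground M :\: X).
Proof. by []. Qed.

End Gen.

Section Build.
Variables (T : finType) (C : eqType) (M : matroid T) (col : T -> C).
Hypothesis HM : is_matroid M.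
Hypothesis HC : courteous col M.
Let S := ground M.
Let X c := [set x | col x == c].

Lemma build n : forall E Z : {set T}, #|E| = n -> E \subset S -> Z \subset S ->
  (forall c, rank M <= rk M ((Z :\: X c) :|: E)) ->
  exists Z' : {set T}, [/\ Z' \subset S, #|Z'| <= #|Z| + 2 * #|E| &
                 forall c, rank M <= rk M (Z' :\: X c)].
Proof.
elim: n => [|n IH] E Z hE ES ZS hr.
  move/eqP: hE; rewrite cards_eq0 => /eqP E0; subst E.
  by exists Z; split => // [|c]; [rewrite cards0; lia|]; have := hr c; rewrite setU0.
have [e eE] : exists e, e \in E by apply/card_gt0P; rewrite hE.
have hE' : #|E :\ e| = n by move: hE; rewrite (cardsD1 e) eE; case.
have ES' : E :\ e \subset S by apply: subset_trans ES; apply: subD1set.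
have eS : e \in S by apply: (subsetP ES).
set A := (Z :\: X (col e)) :|: (E :\ e).
have Egen : forall Z1 : {set T}, Z \subset Z1 -> e \in Z1 -> forall c, c != (col e) ->
   rank M <= rk M ((Z1 :\: X c) :|: (E :\ e)).
  move=> Z1 ZZ1 eZ1 c cd; apply: leq_trans (hr c) _; apply: rk_mono.
  apply/subsetP => x; rewrite !inE => /orP[/andP[xc xZ]|xE].
    by rewrite xc (subsetP ZZ1 x xZ).
  case xe : (x == e); last by rewrite xE orbT.
  by move/eqP: xe => ->; rewrite eZ1 /= andbT eq_sym orbF.
have Ad : rank M <= (rk M A).+1.
  apply: leq_trans (hr (col e)) _; apply: leq_trans (rk_add1 HM A e); apply: rk_mono.
  apply/subsetP => x; rewrite !inE => /orP[/andP[xc xZ]|xE].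
    by rewrite xc xZ orbT.
  by case: (x == e); rewrite // xE !orbT.
case: (leqP (rank M) (rk M A)) => hA.
  have Z1S : e |: Z \subset S.
    by apply/subsetP => x; rewrite !inE => /orP[/eqP -> //|]; exact: (subsetP ZS).
  have hr1 : forall c, rank M <= rk M (((e |: Z) :\: X c) :|: (E :\ e)).
    move=> c.
    case cd : (c == (col e)).
      move/eqP: cd => ->; apply: leq_trans hA _; apply: rk_mono.
      by apply: setSU; apply: setSD; apply: subsetUr.
    by apply: Egen; rewrite ?cd ?setU11 //; apply: subsetUr.
  have [Z' [Z'S cZ' hZ']] := IH (E :\ e) (e |: Z) hE' ES' Z1S hr1.
  exists Z'; split => //; apply: leq_trans cZ' _; rewrite cardsU1 (cardsD1 e E) eE hE'.
  case: (e \notin Z) => /=; lia.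
have hlt : rk M A < rk M (A :|: (S :\: X (col e))).
  apply: leq_trans hA _; rewrite -(HC (col e)) rank_del; apply: rk_mono; apply: subsetUr.
have [f fS hf] := rk_aug HM hlt.
move: fS; rewrite !inE => /andP[fd fS].
have Z1S : f |: (e |: Z) \subset S.
  by apply/subsetP => x; rewrite !inE => /orP[/eqP -> //|/orP[/eqP -> //|]]; exact: (subsetP ZS).
have hr1 : forall c, rank M <= rk M (((f |: (e |: Z)) :\: X c) :|: (E :\ e)).
  move=> c.
  case cd : (c == (col e)).
    move/eqP: cd => ->; apply: leq_trans Ad _; apply: leq_trans hf _; apply: rk_mono.
    apply/subsetP => x; rewrite !inE => /orP[/eqP ->|]; first by rewrite fd eqxx.
    by case/orP => [/andP[-> ->]|->]; rewrite ?orbT.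
  apply: Egen; rewrite ?cd ?setU11 ?inE ?eqxx ?orbT //.
  by apply/subsetP => x xZ; rewrite !inE xZ !orbT.
have [Z' [Z'S cZ' hZ']] := IH (E :\ e) (f |: (e |: Z)) hE' ES' Z1S hr1.
exists Z'; split => //; apply: leq_trans cZ' _; rewrite !cardsU1 (cardsD1 e E) eE hE'.
case: (f \notin _); case: (e \notin Z) => /=; lia.
Qed.

Lemma part1 : (forall s, s \in ground M -> ~ courteous col (deletion M [set s])) ->
      #|ground M| <= 2 * rank M.
Proof.
move=> hmin.
have [B [hB eB]] := rank_wit HM.
have BS : B \subset S by case: HM => _ h2 _ _; exact: h2.
have [Z' [Z'S cZ' hZ']] := build (erefl #|B|) BS (sub0set S)
  (fun c => leq_trans (eq_leq (esym eB)) (@rk_ge _ M (set0 :\: X c :|: B) B hB (subsetUr _ _))).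
rewrite cards0 add0n eB in cZ'.
case: (leqP #|S| (2 * rank M)) => // hlt; exfalso.
have [s sS sZ] : exists2 s, s \in S & s \notin Z'.
  apply/exists_inP; rewrite -negb_forall_in; apply/negP => /forall_inP h.
  have : S \subset Z' by apply/subsetP => x /h.
  move/subset_leq_card => hh; lia.
apply: (hmin s sS) => c; apply/eqP; rewrite eqn_leq; apply/andP; split.
  apply/bigmax_leqP => I /= /andP[/andP[h1 h2] _].
  apply: (@leq_bigmax_cond _ (fun I : {set T} => indep (deletion M [set s]) I) (fun I : {set T} => #|I|)); by rewrite /= h1 h2.
apply: (@leq_trans (rank M)).
  apply/bigmax_leqP => I /= /andP[h1 _].
  exact: (@leq_bigmax_cond _ (fun I : {set T} => indep M I) (fun I : {set T} => #|I|)).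
have [I [hI hIs eI]] := rk_wit HM (Z' :\: X c).
apply: leq_trans (hZ' c) _; rewrite -eI.
have h1 : I \subset ground M :\: [set s].
  apply/subsetP => x xI; have := subsetP hIs x xI; rewrite !inE => /andP[_ xZ].
  rewrite (subsetP Z'S x xZ) andbT; apply/eqP => exs; by rewrite -exs xZ in sZ.
apply: (@leq_bigmax_cond _ (fun I : {set T} => (indep M I && (I \subset ground M :\: [set s])) && (I \subset (ground M :\: [set s]) :\: [set x | col x == c])) (fun I : {set T} => #|I|)).
rewrite hI h1 /=; apply/subsetP => x xI; have := subsetP hIs x xI; rewrite !inE => /andP[-> _].
by have := subsetP h1 x xI; rewrite !inE => ->.
Qed.
End Build.

Section Ex.
Variable r : nat.
Hypothesis r0 : 0 < r.
Let T := (bool * 'I_r)%type.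
Definition pind (I : {set T}) : bool :=
  [forall i : 'I_r, ~~ (((true, i) \in I) && ((false, i) \in I))].
Definition PM : matroid T := Matroid [set: T] pind.

Lemma pind_inj (I : {set T}) : pind I -> {in I &, injective (@snd bool 'I_r)}.
Proof.
move=> /forallP h [a i] [b j] hi hj /= eij; subst j.
case: a b hi hj => [] [] // hi hj; have := h i; by rewrite ?hi ?hj.
Qed.

Lemma pind_card (I : {set T}) : pind I -> #|I| = #|[set x.2 | x in I]|.
Proof. by move=> h; rewrite card_in_imset //; exact: pind_inj. Qed.

Lemma pind_le (I : {set T}) : pind I -> #|I| <= r.
Proof.
move=> h; rewrite pind_card //.
by apply: leq_trans (max_card _) _; rewrite card_ord.
Qed.

Definition side (b : bool) : {set T} := [set (b, i) | i : 'I_r].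

Lemma side_card b : #|side b| = r.
Proof. rewrite card_imset ?card_ord //; by move=> i j [] . Qed.

Lemma side_ind b : pind (side b).
Proof.
apply/forallP => i; apply/negP => /andP[/imsetP[j _ [e1 _]] /imsetP[k _ [e2 _]]].
by rewrite -e1 in e2.
Qed.

Lemma PM_matroid : is_matroid PM.
Proof.
split.
- by apply/forallP => i; rewrite !inE.
- by move=> I _; apply: subsetT.
- move=> I J JI /forallP h; apply/forallP => i; apply/negP => /andP[a b].
  by have := h i; rewrite (subsetP JI _ a) (subsetP JI _ b).
move=> I J hI hJ lt.
have : ~~ ([set x.2 | x in J] \subset [set x.2 | x in I]).
  apply/negP => /subset_leq_card; rewrite -!pind_card //; lia.
case/subsetPn => i /imsetP[[b j] xJ /= ->] /negP niI.
exists (b, j).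
  rewrite !inE xJ andbT; apply/negP => xI; apply: niI; by apply/imsetP; exists (b, j).
apply/forallP => k; rewrite !inE.
have nI c : ((c, j) \in I) = false by apply/negP => cI; apply: niI; apply/imsetP; exists (c, j).
case: (eqVneq k j) => [->|kj].
  by rewrite !nI !orbF !xpair_eqE !eqxx !andbT; case: b {xJ}.
have ne c : ((c, k) == (b, j)) = false by rewrite xpair_eqE (negPf kj) andbF.
rewrite !ne /=; move/forallP: hI; exact.
Qed.

Lemma PM_rank : rank PM = r.
Proof.
apply/eqP; rewrite eqn_leq; apply/andP; split.
  by apply/bigmax_leqP => I; apply: pind_le.
rewrite -{1}(side_card false).
exact: (@leq_bigmax_cond _ (fun I : {set T} => indep PM I) (fun I : {set T} => #|I|) _ (side_ind false)).
Qed.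

Lemma PM_court : courteous (@fst bool 'I_r) PM.
Proof.
move=> c; rewrite PM_rank; apply/eqP; rewrite eqn_leq; apply/andP; split.
  by apply/bigmax_leqP => I /andP[h _]; apply: pind_le.
rewrite -{1}(side_card (~~ c)).
apply: (@leq_bigmax_cond _ (fun I : {set T} => indep (deletion PM [set x | x.1 == c]) I) (fun I : {set T} => #|I|)).
rewrite /= side_ind /=; apply/subsetP => x /imsetP[i _ ->]; rewrite !inE /=.
by case: c.
Qed.

Lemma PM_min s : s \in ground PM -> ~ courteous (@fst bool 'I_r) (deletion PM [set s]).
Proof.
move=> _ /(_ (~~ s.1)).
have -> : rank (deletion PM [set s]) = r.
  apply/eqP; rewrite eqn_leq; apply/andP; split.
    by apply/bigmax_leqP => I /andP[h _]; apply: pind_le.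
  rewrite -{1}(side_card (~~ s.1)).
  apply: (@leq_bigmax_cond _ (fun I : {set T} => indep (deletion PM [set s]) I) (fun I : {set T} => #|I|)).
  rewrite /= side_ind /=; apply/subsetP => x /imsetP[i _ ->]; rewrite !inE /=.
  by rewrite andbT; case: s => [b l]; rewrite xpair_eqE /=; case: b.
move=> E.
have : rank (deletion (deletion PM [set s]) [set x | x.1 == ~~ s.1]) <= r.-1.
  apply/bigmax_leqP => I /= /andP[/andP[h1 _] h2].
  rewrite pind_card //.
  have : [set x.2 | x in I] \subset ~: [set s.2].
    apply/subsetP => k /imsetP[[b j] xI ->]; rewrite !inE /=.
    have := subsetP h2 _ xI; rewrite !inE /= => /andP[hb /andP[ns _]].
    apply/eqP => ejs; move/negP: ns; apply; apply/eqP; rewrite ejs.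
    have -> : b = s.1 by move: hb; case: (b); case: (s.1).
    by case: (s).
  move/subset_leq_card; rewrite [#|~: [set s.2]|]cardsCs setCK cards1 card_ord; lia.
by move=> h; rewrite E in h; lia.
Qed.

Lemma part2 : exists (T : finType) (C : eqType) (M : matroid T) (col : T -> C),
       [/\ is_matroid M, rank M = r,
           courteous col M,
           (forall s, s \in ground M -> ~ courteous col (deletion M [set s])) &
           #|ground M| = 2 * r].
Proof.
exists T, bool, PM, (@fst bool 'I_r); split.
- exact: PM_matroid.
- exact: PM_rank.
- exact: PM_court.
- exact: PM_min.
by rewrite /= cardsT card_prod card_bool card_ord.
Qed.
End Ex.

Theorem corollary3p8 :
  (forall (T : finType) (C : eqType) (M : matroid T) (col : T -> C),
      is_matroid M ->
      courteous col M ->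
      (forall s, s \in ground M -> ~ courteous col (deletion M [set s])) ->
      #|ground M| <= 2 * rank M)
  /\
  (forall r : nat, 0 < r ->
     exists (T : finType) (C : eqType) (M : matroid T) (col : T -> C),
       [/\ is_matroid M, rank M = r,
           courteous col M,
           (forall s, s \in ground M -> ~ courteous col (deletion M [set s])) &
           #|ground M| = 2 * r]).
Proof.
split.
  by move=> T C M col HM HC; apply: part1.
by move=> r r0; apply: part2.
Qed.
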